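(* Under the setup described in the context, for every $k\in\mathbb{Z}_+$, $$p_k:=\upsilon^\rho_\xi\big(I^k_0\text{ is bad}\big)\le L_k^{-\alpha}.$$
   Context: Let $\xi$ be an aperiodic positive integer-valued random variable with $\mathbb{E}(\xi^{1+\varepsilon})<\infty$ for some $\varepsilon>0$. Let $\rho$ be the stationary delay: $\mathbb{P}(\rho=k)=\frac{1}{\mathbb{E}(\xi)}\sum_{i\ge k+1}\mathbb{P}(\xi=i)$, $k\in\mathbb{Z}_+$, independent of i.i.d. copies $\xi_1,\xi_2,\dots$ of $\xi$. Under $\upsilon^\rho_\xi$, the environment is the random set $\Lambda=\{X_0,X_1,\dots\}\subseteq\mathbb{Z}_+$ where $X_0=\rho$, $X_i=X_{i-1}+\xi_i$. Let $c_1=c_1(\xi,\varepsilon)\in(0,\infty)$ be a constant such that, writing $Y_n=\mathbf 1_{\{n\in\Lambda\}}$, for all $n,m\in\mathbb{Z}_+$ and all events $A\in\sigma(Y_i;0\le i\le m)$, $B\in\sigma(Y_i;i\ge m+n)$ one has $\upsilon^\rho_\xi(A\cap B)\le\upsilon^\rho_\xi(A)\upsilon^\rho_\xi(B)+c_1n^{-\varepsilon}$ (such a constant exists). Fix $\alpha\in(0,\varepsilon/2]$ and $\gamma\in(1,1+\frac{\alpha}{\alpha+2})$, and let $L_0\in\mathbb{Z}_+$ satisfy: (i) $L_0^{\gamma-1}\ge3$; (ii) $L_0^{\varepsilon-\alpha}\ge\mathbb{E}(\rho^\varepsilon)$; (iii) $L_0^{c_2}\ge c_1+1$ where $c_2=2+2\alpha-\gamma\alpha-2\gamma>0$.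 Define $L_k=L_{k-1}\lfloor L_{k-1}^{\gamma-1}\rfloor$ for $k\ge1$. For $j,k\in\mathbb{Z}_+$ let the block $I^k_j=[jL_k,(j+1)L_k)\cap\mathbb{Z}_+$ and $l_{k,j}=\{j\lfloor L_{k-1}^{\gamma-1}\rfloor,\dots,(j+1)\lfloor L_{k-1}^{\gamma-1}\rfloor-1\}$ (so $I^k_j=\bigcup_{i\in l_{k,j}}I^{k-1}_i$). For an environment $\Lambda\subseteq\mathbb{Z}_+$: $I^0_j$ is bad if $\Lambda\cap I^0_j=\varnothing$; for $k\ge1$, $I^k_j$ is bad if there exist $i_1,i_2\in l_{k,j}$ with $|i_1-i_2|\ge2$ such that $I^{k-1}_{i_1}$ and $I^{k-1}_{i_2}$ are both bad. A block is good if it is not bad. *)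

(* Defs.v *)
From Stdlib Require Import Reals Lia Arith ZArith List.
From Stdlib Require Import Classical ClassicalEpsilon.
Open Scope R_scope.

(* Value of a series sum_{i>=0} f i (0 if it does not converge). *)
Definition Series (f : nat -> R) : R :=
  match excluded_middle_informative (exists l, infinite_sum f l) with
  | left H => proj1_sig (constructive_indefinite_description _ H)
  | right _ => 0
  end.

Definition ind (P : Prop) : R :=
  if excluded_middle_informative P then 1 else 0.

(* x^e for x >= 0 with the convention 0^e = 0 (used for e > 0). *)
Definition rpow (x e : R) : R := if Req_EM_T x 0 then 0 else Rpower x e.

(* floor of a real, as a nat (0 for negative reals) *)
Definition floorN (x : R) : nat := Z.to_nat (Int_part x).

(* ---- the law of xi: p i = P(xi = i) ---- *)
Definition is_pmf (p : nat -> R) : Prop :=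
  (forall i, 0 <= p i) /\ infinite_sum p 1.

Definition positive_valued (p : nat -> R) : Prop := p 0%nat = 0.

Definition aperiodic (p : nat -> R) : Prop :=
  forall d : nat, (forall i : nat, 0 < p i -> Nat.divide d i) -> d = 1%nat.

Definition mean (p : nat -> R) : R := Series (fun i => p i * INR i).

(* stationary delay: P(rho = k) = (1/E xi) * sum_{i >= k+1} P(xi = i) *)
Definition prho (p : nat -> R) (k : nat) : R :=
  / mean p * Series (fun i => p (k + 1 + i)%nat).

(* xs i is xi_{i+1}; X_0 = r, X_j = r + xi_1 + ... + xi_j *)
Fixpoint Xpos (r : nat) (xs : nat -> nat) (j : nat) : nat :=
  match j with
  | O => r
  | S j' => (Xpos r xs j' + xs j')%nat
  end.

(* Y_n = 1_{n in Lambda}; since xi >= 1, X_j >= j, so only j <= n matter. *)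
Definition Lam (r : nat) (xs : nat -> nat) (n : nat) : bool :=
  existsb (fun j => Nat.eqb (Xpos r xs j) n) (seq 0 (S n)).

Definition ncons (x : nat) (xs : nat -> nat) : nat -> nat :=
  fun i => match i with O => x | S i' => xs i' end.

(* E[ f(xi_1, ..., xi_N, 0, 0, ...) ] for xi_i i.i.d. with law p *)
Fixpoint EX (p : nat -> R) (N : nat) (f : (nat -> nat) -> R) : R :=
  match N with
  | O => f (fun _ => 0%nat)
  | S N' => Series (fun x => p x * EX p N' (fun xs => f (ncons x xs)))
  end.

(* Probability, under upsilon^rho_xi, of an event E about the environment
   (Y_n)_n which only depends on Y_0, ..., Y_{N-1}.  Since xi >= 1,
   Lambda /\ [0,N) is determined by rho, xi_1, ..., xi_N. *)
Definition envP (p : nat -> R) (N : nat) (E : (nat -> bool) -> Prop) : R :=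
  Series (fun r => prho p r * EX p N (fun xs => ind (E (Lam r xs)))).

Definition dep_on (E : (nat -> bool) -> Prop) (a b : nat) : Prop :=
  forall y y' : nat -> bool,
    (forall i, (a <= i <= b)%nat -> y i = y' i) -> (E y <-> E y').

Fixpoint Lsc (L0 : nat) (g : R) (k : nat) : nat :=
  match k with
  | O => L0
  | S k' => (Lsc L0 g k' * floorN (Rpower (INR (Lsc L0 g k')) (g - 1)))%nat
  end.

Definition mfac (L0 : nat) (g : R) (k : nat) : nat :=
  floorN (Rpower (INR (Lsc L0 g k)) (g - 1)).

(* bad L0 g y k j : block I^k_j = [j L_k, (j+1) L_k) is bad in environment y *)
Fixpoint bad (L0 : nat) (g : R) (y : nat -> bool) (k j : nat) : Prop :=
  match k with
  | O => forall i, (j * L0 <= i < (j + 1) * L0)%nat -> y i = false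
  | S k' =>
      exists i1 i2,
        (j * mfac L0 g k' <= i1 < (j + 1) * mfac L0 g k')%nat /\
        (j * mfac L0 g k' <= i2 < (j + 1) * mfac L0 g k')%nat /\
        (i1 + 2 <= i2 \/ i2 + 2 <= i1)%nat /\
        bad L0 g y k' i1 /\ bad L0 g y k' i2
  end.

(* Main.v *)
From Coquelicot Require Import Coquelicot.
From Stdlib Require Import Reals Lia Lra FunctionalExtensionality Classical ClassicalEpsilon ZArith List Bool.
Require Import Defs.
Open Scope R_scope.
Notation CS := Coquelicot.Series.Series.

Lemma DS_is f l : is_series f l -> Series f = l.
Proof.
  intros H. apply is_series_Reals in H. unfold Series.
  destruct excluded_middle_informative as [e|n].
  - destruct (constructive_indefinite_description _ e) as [l' Hl']; simpl.
    eapply uniqueness_sum; eauto.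
  - exfalso; apply n; eauto.
Qed.

Lemma DS_CS f : ex_series f -> Series f = CS f.
Proof. intros H; apply DS_is, Series_correct, H. Qed.

Lemma exs_cmp a b : (forall n, 0 <= a n <= b n) -> ex_series b -> ex_series a.
Proof.
  intros H Hb. apply (ex_series_le a b); auto.
  intros n; specialize (H n). change (Rabs (a n) <= b n). rewrite Rabs_pos_eq; lra.
Qed.

Lemma DS_le a b : (forall n, 0 <= a n <= b n) -> ex_series b -> Series a <= Series b.
Proof.
  intros H Hb. rewrite (DS_CS a), (DS_CS b); auto. apply Series_le; auto.
  eapply exs_cmp; eauto.
Qed.

Lemma CS_zero : CS (fun _ => 0) = 0.
Proof.
  apply is_series_unique. apply is_series_Reals. intros e He. exists 0%nat.
  intros n _. rewrite sum_cte. unfold R_dist. rewrite Rmult_0_l, Rminus_0_r, Rabs_R0. lra.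
Qed.

Lemma DS_nonneg a : (forall n, 0 <= a n) -> ex_series a -> 0 <= Series a.
Proof.
  intros H Ha. rewrite DS_CS; auto. rewrite <- CS_zero. apply Series_le; auto.
  intros; split; [lra|auto].
Qed.

Lemma DS_zero : Series (fun _ => 0) = 0.
Proof. apply DS_is. apply is_series_Reals. unfold infinite_sum. intros e He. exists 0%nat.
  intros n _. rewrite sum_cte. unfold R_dist. rewrite Rmult_0_l, Rminus_0_r, Rabs_R0. lra. Qed.

Lemma exs_plus a b : ex_series a -> ex_series b -> ex_series (fun n => a n + b n).
Proof. intros; apply (ex_series_plus a b); auto. Qed.

Lemma exs_scal c a : ex_series a -> ex_series (fun n => c * a n).
Proof. intros; apply (ex_series_scal_l c a); auto. Qed.

Lemma DS_plus a b : ex_series a -> ex_series b -> Series (fun n => a n + b n) = Series a + Series b.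
Proof. intros; rewrite !DS_CS; auto using exs_plus. apply Series_plus; auto. Qed.

Lemma DS_scal c a : ex_series a -> Series (fun n => c * a n) = c * Series a.
Proof. intros; rewrite !DS_CS; auto using exs_scal. apply Series_scal_l. Qed.

Lemma DS_incr1 a : ex_series a -> Series a = a 0%nat + Series (fun k => a (S k)).
Proof. intros H. rewrite !DS_CS; auto. apply Series_incr_1; auto.
  apply (ex_series_incr_1 a); auto. Qed.

Lemma DS_ext a b : (forall n, a n = b n) -> Series a = Series b.
Proof. intros H; f_equal; apply functional_extensionality; auto. Qed.

Lemma exs_ext (a b : nat -> R) : (forall n, a n = b n) -> ex_series a -> ex_series b.
Proof. intros H; replace b with a; auto; apply functional_extensionality; auto. Qed.

Lemma exs_bounded (a : nat -> R) B : (forall n, 0 <= a n) -> (forall N, sum_f_R0 a N <= B) -> ex_series a.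
Proof.
  intros H0 HB. destruct (growing_cv (sum_f_R0 a)) as [l Hl].
  - intros n. simpl. specialize (H0 (S n)). lra.
  - exists B. intros x [N ->]. auto.
  - exists l. apply is_series_Reals. exact Hl.
Qed.

Lemma sum_le_series a N : (forall n, 0 <= a n) -> ex_series a -> sum_f_R0 a N <= Series a.
Proof.
  intros H0 Ha. rewrite DS_CS; auto. destruct Ha as [l Hl].
  rewrite (is_series_unique a l Hl). apply is_series_Reals in Hl.
  apply growing_ineq; auto. intros n; simpl; specialize (H0 (S n)); lra.
Qed.


Lemma exP p : is_pmf p -> ex_series p.
Proof. intros [_ H]. exists 1. apply is_series_Reals; auto. Qed.
Lemma DSp p : is_pmf p -> Series p = 1.
Proof. intros [_ H]. apply DS_is, is_series_Reals; auto. Qed.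

Definition bdd (B : R) (f : (nat -> nat) -> R) := forall xs, 0 <= f xs <= B.
Definition depX (K : nat) (f : (nat -> nat) -> R) :=
  forall xs xs', (forall i, (i < K)%nat -> xs i = xs' i) -> f xs = f xs'.

Lemma EX_S p N f : EX p (S N) f = Series (fun x => p x * EX p N (fun xs => f (ncons x xs))).
Proof. reflexivity. Qed.

Lemma DS_pc p c : is_pmf p -> Series (fun x => p x * c) = c.
Proof. intros Hp. rewrite (DS_ext _ (fun x => c * p x)) by (intros; ring).
  rewrite DS_scal by (apply exP; auto). rewrite DSp; auto; ring. Qed.

Lemma exs_pc p c : is_pmf p -> ex_series (fun x => p x * c).
Proof. intros Hp. apply (exs_ext (fun x => c * p x)); [intros; ring|]. apply exs_scal, exP; auto. Qed.

Lemma EX_bdd p N : is_pmf p -> forall f B, bdd B f -> 0 <= EX p N f <= B.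
Proof.
  intros Hp. induction N as [|N IH]; intros f B Hf.
  - simpl. apply Hf.
  - rewrite EX_S. assert (Hx : forall x, 0 <= p x * EX p N (fun xs => f (ncons x xs)) <= p x * B).
    { intros x. destruct Hp as [H0 _]. specialize (H0 x).
      assert (Hb := IH (fun xs => f (ncons x xs)) B (fun xs => Hf _)).
      split; [apply Rmult_le_pos|apply Rmult_le_compat_l]; lra. }
    split.
    + apply DS_nonneg; [intros; apply Hx|]. eapply exs_cmp; [apply Hx|apply exs_pc; auto].
    + rewrite <- (DS_pc p B Hp). apply DS_le; [apply Hx|apply exs_pc; auto].
Qed.

Lemma EX_exs p N f B : is_pmf p -> bdd B f ->
  ex_series (fun x => p x * EX p N (fun xs => f (ncons x xs))).
Proof.
  intros Hp Hf. apply (exs_cmp _ (fun x => p x * B)); [|apply exs_pc; auto].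
  intros x. pose proof (proj1 Hp x) as H0.
  assert (Hb := EX_bdd p N Hp (fun xs => f (ncons x xs)) B (fun xs => Hf _)).
  split; [apply Rmult_le_pos|apply Rmult_le_compat_l]; lra.
Qed.

Lemma EX_plus p N : is_pmf p -> forall f g B B', bdd B f -> bdd B' g ->
  EX p N (fun xs => f xs + g xs) = EX p N f + EX p N g.
Proof.
  intros Hp. induction N as [|N IH]; intros f g B B' Hf Hg.
  - reflexivity.
  - rewrite !EX_S. rewrite <- DS_plus by (eapply EX_exs; eauto). apply DS_ext. intros x.
    rewrite (IH (fun xs => f (ncons x xs)) (fun xs => g (ncons x xs)) B B'); try ring;
    intros xs; auto.
Qed.

Lemma EX_scal p N : is_pmf p -> forall f B c, bdd B f ->
  EX p N (fun xs => c * f xs) = c * EX p N f.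
Proof.
  intros Hp. induction N as [|N IH]; intros f B c Hf.
  - reflexivity.
  - rewrite !EX_S. rewrite <- DS_scal by (eapply EX_exs; eauto). apply DS_ext. intros x.
    rewrite (IH (fun xs => f (ncons x xs)) B c); [ring|]. intros xs; auto.
Qed.

Lemma EX_le p N f g B : is_pmf p -> bdd B f -> bdd B g -> (forall xs, f xs <= g xs) ->
  EX p N f <= EX p N g.
Proof.
  intros Hp Hf Hg Hfg.
  assert (E : EX p N g = EX p N (fun xs => f xs + (g xs - f xs))).
  { f_equal. apply functional_extensionality; intros; ring. }
  rewrite E, (EX_plus p N Hp f (fun xs => g xs - f xs) B B Hf).
  - assert (H := EX_bdd p N Hp (fun xs => g xs - f xs) B). 
    assert (0 <= EX p N (fun xs => g xs - f xs)); [|lra].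
    apply H. intros xs; specialize (Hf xs); specialize (Hg xs); specialize (Hfg xs); lra.
  - intros xs; specialize (Hf xs); specialize (Hg xs); specialize (Hfg xs); lra.
Qed.

Lemma EX_const p N c : is_pmf p -> EX p N (fun _ => c) = c.
Proof.
  intros Hp. induction N as [|N IH]; [reflexivity|].
  rewrite EX_S. rewrite IH. apply DS_pc; auto.
Qed.

Lemma EX_ext_pos p N : p 0%nat = 0 -> forall f g,
  (forall xs, (forall i, (i < N)%nat -> (1 <= xs i)%nat) -> f xs = g xs) ->
  EX p N f = EX p N g.
Proof.
  intros Hz. induction N as [|N IH]; intros f g H.
  - simpl. apply H. intros; lia.
  - rewrite !EX_S. apply DS_ext. intros x. destruct x as [|x].
    + rewrite Hz; ring.
    + f_equal. apply IH. intros xs Hxs. apply H. intros [|i] Hi; simpl; [lia|]. apply Hxs; lia.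
Qed.

Lemma EX_depS p N : is_pmf p -> forall f, depX (S N) f -> depX N f -> EX p (S N) f = EX p N f.
Proof.
  intros Hp. induction N as [|N IH]; intros f _ Hf.
  - rewrite EX_S. simpl. rewrite (DS_ext _ (fun x => p x * f (fun _ => 0%nat))).
    + apply DS_pc; auto.
    + intros x. f_equal. apply Hf. intros; lia.
  - rewrite EX_S. rewrite (EX_S p N f). apply DS_ext; intros x. f_equal.
    apply IH; intros xs xs' H; apply Hf; intros [|i] Hi; simpl; auto; apply H; lia.
Qed.

Lemma depX_mono K K' f : (K <= K')%nat -> depX K f -> depX K' f.
Proof. intros HK H xs xs' E. apply H. intros; apply E; lia. Qed.

Lemma EX_dep p K N f : is_pmf p -> depX K f -> (K <= N)%nat -> EX p N f = EX p K f.
Proof.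
  intros Hp Hf HKN. induction HKN as [|N HKN IH]; [reflexivity|].
  rewrite <- IH. apply EX_depS; auto; eapply depX_mono; try eassumption; lia.
Qed.


Definition shift (s : nat) (y : nat -> bool) : nat -> bool := fun n => y (n + s)%nat.
Definition posify (xs : nat -> nat) : nat -> nat := fun i => Nat.max 1 (xs i).
Definition depY (K : nat) (E : (nat -> bool) -> Prop) :=
  forall y y', (forall i, (i < K)%nat -> y i = y' i) -> (E y <-> E y').

Lemma Xpos_ge r xs j : (r <= Xpos r xs j)%nat.
Proof. induction j; simpl; lia. Qed.

Lemma Xpos_ge_pos r xs j : (forall i, 1 <= xs i)%nat -> (r + j <= Xpos r xs j)%nat.
Proof. intros H; induction j; simpl; [lia|]. specialize (H j); lia. Qed.

Lemma Xpos_dep r xs xs' j : (forall i, (i < j)%nat -> xs i = xs' i) -> Xpos r xs j = Xpos r xs' j.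
Proof. induction j; intros H; simpl; auto. rewrite IHj by (intros; apply H; lia). rewrite H by lia; auto. Qed.

Lemma existsb_ext' {A} (f g : A -> bool) l : (forall x, In x l -> f x = g x) -> existsb f l = existsb g l.
Proof. induction l; simpl; intros H; auto. rewrite H by auto. rewrite IHl; auto. Qed.

Lemma Lam_dep r xs xs' n : (forall i, (i < n)%nat -> xs i = xs' i) -> Lam r xs n = Lam r xs' n.
Proof.
  intros H. unfold Lam. apply existsb_ext'. intros j Hj. apply in_seq in Hj.
  rewrite (Xpos_dep r xs xs' j); auto. intros; apply H; lia.
Qed.

Lemma Lam_true r xs n : Lam r xs n = true <-> exists j, (j <= n)%nat /\ Xpos r xs j = n.
Proof.
  unfold Lam. rewrite existsb_exists. split.
  - intros [j [Hj E]]. apply in_seq in Hj. apply Nat.eqb_eq in E. exists j; split; [lia|auto].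
  - intros [j [Hj E]]. exists j; split; [apply in_seq; lia|apply Nat.eqb_eq; auto].
Qed.

Lemma Lam_char_pos r xs n : (forall i, 1 <= xs i)%nat ->
  (Lam r xs n = true <-> exists j, Xpos r xs j = n).
Proof.
  intros Hp. rewrite Lam_true. split.
  - intros [j [_ E]]; eauto.
  - intros [j E]. exists j; split; auto. pose proof (Xpos_ge_pos r xs j Hp). lia.
Qed.

Lemma Xpos_Sr r xs j : Xpos (S r) xs j = S (Xpos r xs j).
Proof. induction j; simpl; auto. rewrite IHj; auto. Qed.

Lemma Xpos_tail r xs j : Xpos r xs (S j) = Xpos (r + xs 0%nat) (fun i => xs (S i)) j.
Proof. induction j; simpl; auto. Qed.

Lemma shift1_LamS r xs : (forall i, 1 <= xs i)%nat -> shift 1 (Lam (S r) xs) = Lam r xs.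
Proof.
  intros Hp. apply functional_extensionality; intros n. unfold shift.
  apply eq_true_iff_eq. rewrite !Lam_char_pos by auto. split.
  - intros [j E]. rewrite Xpos_Sr in E. exists j; lia.
  - intros [j E]. exists j. rewrite Xpos_Sr. lia.
Qed.

Lemma shift1_Lam0 x xs : (forall i, 1 <= xs i)%nat -> (1 <= x)%nat ->
  shift 1 (Lam 0 (ncons x xs)) = Lam (x - 1) xs.
Proof.
  intros Hp Hx. assert (Hp' : forall i, (1 <= ncons x xs i)%nat) by (intros [|i]; simpl; auto).
  apply functional_extensionality; intros n. unfold shift.
  apply eq_true_iff_eq. rewrite !Lam_char_pos by auto. split.
  - intros [[|j] E]; [simpl in E; lia|]. rewrite Xpos_tail in E. simpl in E.
    change (fun i => xs i) with xs in E.
    exists j. destruct x as [|x']; [lia|]. rewrite Xpos_Sr in E. replace (S x' - 1)%nat with x' by lia. lia.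
  - intros [j E]. exists (S j). rewrite Xpos_tail. simpl. change (fun i => xs i) with xs.
    destruct x as [|x']; [lia|]. rewrite Xpos_Sr. replace (S x' - 1)%nat with x' in E by lia. lia.
Qed.

Lemma posify_pos xs i : (1 <= posify xs i)%nat.
Proof. unfold posify; lia. Qed.

Lemma posify_ncons x xs : posify (ncons x xs) = ncons (Nat.max 1 x) (posify xs).
Proof. apply functional_extensionality; intros [|i]; reflexivity. Qed.

Lemma ind_iff (P Q : Prop) : (P <-> Q) -> ind P = ind Q.
Proof. intros H. unfold ind. destruct excluded_middle_informative; destruct excluded_middle_informative; tauto. Qed.

Lemma ind_bd (P : Prop) : 0 <= ind P <= 1.
Proof. unfold ind. destruct excluded_middle_informative; lra. Qed.

Lemma ind_true (P : Prop) : P -> ind P = 1.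
Proof. unfold ind. destruct excluded_middle_informative; tauto. Qed.

Lemma ind_false (P : Prop) : ~ P -> ind P = 0.
Proof. unfold ind. destruct excluded_middle_informative; tauto. Qed.

Lemma depY_mono K K' E : (K <= K')%nat -> depY K E -> depY K' E.
Proof. intros HK H y y' Hy. apply H. intros; apply Hy; lia. Qed.


Lemma Rpower_pos' x y : 0 < Rpower x y.
Proof. unfold Rpower; apply exp_pos. Qed.

Lemma rpow_nonneg x e : 0 <= rpow x e.
Proof. unfold rpow. destruct Req_EM_T; [lra|]. left; apply Rpower_pos'. Qed.

Lemma rpow_INR_S n e : rpow (INR (S n)) e = Rpower (INR (S n)) e.
Proof. unfold rpow. destruct Req_EM_T as [E|]; auto. exfalso. pose proof (lt_0_INR (S n) ltac:(lia)). lra. Qed.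

Lemma rpow_mono j j' e : 0 <= e -> (j <= j')%nat -> rpow (INR j) e <= rpow (INR j') e.
Proof.
  intros He Hj. destruct j as [|j].
  - simpl. unfold rpow at 1. destruct Req_EM_T; [apply rpow_nonneg|lra].
  - destruct j' as [|j']; [lia|]. rewrite !rpow_INR_S. apply Rle_Rpower_l; auto.
    split; [apply lt_0_INR; lia|apply le_INR; auto].
Qed.

Lemma rpow_ge1 n e : 0 <= e -> 1 <= rpow (INR (S n)) e.
Proof.
  intros He. rewrite rpow_INR_S. rewrite <- (Rpower_O (INR (S n))) by (apply lt_0_INR; lia).
  apply Rle_Rpower; auto. rewrite S_INR; pose proof (pos_INR n); lra.
Qed.

Lemma DS_sum (F : nat -> nat -> R) N : (forall r, ex_series (F r)) ->
  ex_series (fun j => sum_f_R0 (fun r => F r j) N) /\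
  Series (fun j => sum_f_R0 (fun r => F r j) N) = sum_f_R0 (fun r => Series (F r)) N.
Proof.
  intros H. induction N as [|N [IH1 IH2]]; simpl.
  - split; auto.
  - split; [apply exs_plus; auto|]. rewrite DS_plus; auto. rewrite IH2; auto.
Qed.

Lemma count_sum j R c : 0 <= c ->
  sum_f_R0 (fun r => if (r <? j)%nat then c else 0) R = INR (Nat.min (S R) j) * c.
Proof.
  intros Hc. induction R as [|R IH].
  - destruct j; simpl; ring.
  - rewrite tech5. cbv beta. rewrite IH. destruct (Nat.ltb_spec (S R) j).
    + replace (Nat.min (S (S R)) j) with (S (Nat.min (S R) j)) by lia. rewrite S_INR; ring.
    + replace (Nat.min (S (S R)) j) with (Nat.min (S R) j) by lia. ring.
Qed.


Lemma tail_exs p r : is_pmf p -> ex_series (fun i => p (r + 1 + i)%nat).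
Proof. intros Hp. apply (ex_series_incr_n p (r+1)). apply exP; auto. Qed.

Lemma tail_nonneg p r : is_pmf p -> 0 <= Series (fun i => p (r + 1 + i)%nat).
Proof. intros Hp. apply DS_nonneg; [intros; apply Hp|apply tail_exs; auto]. Qed.

Lemma mean_exs p eps : is_pmf p -> positive_valued p -> 0 < eps ->
  (exists l, infinite_sum (fun i => p i * Rpower (INR i) (1 + eps)) l) ->
  ex_series (fun i => p i * INR i).
Proof.
  intros Hp Hz He [l Hl]. apply (exs_cmp _ (fun i => p i * Rpower (INR i) (1 + eps))).
  - intros [|i].
    + red in Hz. rewrite Hz. simpl. lra.
    + pose proof (proj1 Hp (S i)). split; [apply Rmult_le_pos; auto; apply pos_INR|].
      apply Rmult_le_compat_l; auto. rewrite <- (Rpower_1 (INR (S i))) at 1 by (apply lt_0_INR; lia).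
      apply Rle_Rpower; [rewrite S_INR; pose proof (pos_INR i); lra|lra].
  - exists l. apply is_series_Reals; auto.
Qed.

Lemma mean_ge1 p eps : is_pmf p -> positive_valued p -> 0 < eps ->
  (exists l, infinite_sum (fun i => p i * Rpower (INR i) (1 + eps)) l) -> 1 <= mean p.
Proof.
  intros Hp Hz He Hm. unfold mean. rewrite <- (DSp p Hp). apply DS_le; [|eapply mean_exs; eauto].
  intros [|i]; split; try apply Hp.
  - red in Hz; rewrite Hz; simpl; lra.
  - pose proof (proj1 Hp (S i)). rewrite <- (Rmult_1_r (p (S i))) at 1.
    apply Rmult_le_compat_l; auto. rewrite S_INR; pose proof (pos_INR i); lra.
Qed.

Lemma prho_nonneg p eps r : is_pmf p -> positive_valued p -> 0 < eps ->
  (exists l, infinite_sum (fun i => p i * Rpower (INR i) (1 + eps)) l) -> 0 <= prho p r.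
Proof.
  intros Hp Hz He Hm. unfold prho. apply Rmult_le_pos; [|apply tail_nonneg; auto].
  left; apply Rinv_0_lt_compat. pose proof (mean_ge1 p eps Hp Hz He Hm); lra.
Qed.

Lemma prho_rec p r : is_pmf p -> positive_valued p ->
  prho p r = prho p (S r) + prho p 0 * p (S r).
Proof.
  intros Hp Hz. unfold prho.
  assert (E0 : Series (fun i => p (0 + 1 + i)%nat) = 1).
  { rewrite <- (DSp p Hp). rewrite (DS_incr1 p (exP p Hp)). red in Hz; rewrite Hz, Rplus_0_l.
    apply DS_ext; intros; f_equal; lia. }
  rewrite E0. rewrite (DS_incr1 _ (tail_exs p r Hp)).
  replace (p (r + 1 + 0)%nat) with (p (S r)) by (f_equal; lia).
  rewrite (DS_ext (fun k => p (r + 1 + S k)%nat) (fun i => p (S r + 1 + i)%nat)) by (intros; f_equal; lia).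
  ring.
Qed.

Lemma prho_rpow_exs p eps : is_pmf p -> positive_valued p -> 0 < eps ->
  (exists l, infinite_sum (fun i => p i * Rpower (INR i) (1 + eps)) l) ->
  ex_series (fun r => prho p r * rpow (INR r) eps).
Proof.
  intros Hp Hz He Hm. pose proof (mean_ge1 p eps Hp Hz He Hm) as Hmu.
  set (q := fun j => p j * rpow (INR j) eps).
  assert (Hq0 : forall j, 0 <= q j) by (intros; apply Rmult_le_pos; [apply Hp|apply rpow_nonneg]).
  assert (HB : ex_series (fun j => INR j * q j)).
  { destruct Hm as [l Hl]. apply (exs_ext (fun i => p i * Rpower (INR i) (1 + eps))).
    - intros [|j]; unfold q.
      + red in Hz; rewrite Hz; simpl; ring.
      + rewrite rpow_INR_S, Rpower_plus, Rpower_1 by (apply lt_0_INR; lia). ring.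
    - exists l; apply is_series_Reals; auto. }
  assert (Hq : ex_series q).
  { apply (exs_cmp _ (fun j => INR j * q j)); auto. intros [|j]; split; auto.
    - unfold q; red in Hz; rewrite Hz; simpl; lra.
    - rewrite <- (Rmult_1_l (q (S j))) at 1. apply Rmult_le_compat_r; auto.
      rewrite S_INR; pose proof (pos_INR j); lra. }
  set (I := fun r j => if (r <? j)%nat then q j else 0).
  assert (HI0 : forall r j, 0 <= I r j <= q j).
  { intros r j; unfold I; destruct (r <? j)%nat; split; auto; lra. }
  assert (HIe : forall r, ex_series (I r)) by (intros; eapply exs_cmp; [apply HI0|auto]).
  assert (HIq : forall r, Series (fun i => q (r + 1 + i)%nat) = Series (I r)).
  { intros r. rewrite !DS_CS; auto; [|apply (ex_series_incr_n q (r+1)); auto].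
    rewrite (Series_incr_n_aux (I r) (r + 1)).
    - apply Series_ext. intros k. unfold I. destruct (Nat.ltb_spec r (r + 1 + k)); auto; lia.
    - intros k Hk. unfold I. destruct (Nat.ltb_spec r k); auto; lia. }
  assert (Hmu' : 0 < / mean p) by (apply Rinv_0_lt_compat; lra).
  assert (Hterm : forall r, 0 <= prho p r * rpow (INR r) eps <= / mean p * Series (I r)).
  { intros r. split.
    - apply Rmult_le_pos; [apply (prho_nonneg p eps); auto|apply rpow_nonneg].
    - unfold prho. rewrite Rmult_assoc. apply Rmult_le_compat_l; [lra|].
      rewrite <- HIq. rewrite Rmult_comm, <- DS_scal by (apply tail_exs; auto).
      apply DS_le; [|apply (ex_series_incr_n q (r+1)); auto].
      intros n. split.
      + apply Rmult_le_pos; [apply rpow_nonneg|apply Hp].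
      + unfold q. rewrite Rmult_comm. apply Rmult_le_compat_l; [apply Hp|]. apply rpow_mono; [lra|lia]. }
  apply (exs_bounded _ (/ mean p * Series (fun j => INR j * q j))).
  - intros; apply Hterm.
  - intros N. eapply Rle_trans. { apply sum_Rle. intros n _. apply Hterm. }
    replace (fun n => / mean p * Series (I n)) with (fun r => Series (I r) * / mean p)
      by (apply functional_extensionality; intros; ring).
    rewrite <- scal_sum. apply Rmult_le_compat_l; [lra|].
    destruct (DS_sum I N HIe) as [Hs1 Hs2]. rewrite <- Hs2.
    apply DS_le; auto. intros j.
    replace (sum_f_R0 (fun r => I r j) N) with (INR (Nat.min (S N) j) * q j)
      by (rewrite <- count_sum by auto; reflexivity). split.
    + apply Rmult_le_pos; auto; apply pos_INR.
    + apply Rmult_le_compat_r; auto. apply le_INR; lia.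
Qed.

Lemma prho_exs p eps : is_pmf p -> positive_valued p -> 0 < eps ->
  (exists l, infinite_sum (fun i => p i * Rpower (INR i) (1 + eps)) l) ->
  ex_series (prho p).
Proof.
  intros Hp Hz He Hm. apply (ex_series_incr_1 (prho p)).
  apply (exs_cmp _ (fun k => prho p (S k) * rpow (INR (S k)) eps)).
  - intros k. pose proof (prho_nonneg p eps (S k) Hp Hz He Hm). split; auto.
    rewrite <- (Rmult_1_r (prho p (S k))) at 1. apply Rmult_le_compat_l; auto. apply rpow_ge1; lra.
  - apply (ex_series_incr_1 (fun r => prho p r * rpow (INR r) eps)). apply prho_rpow_exs; auto.
Qed.


Definition Good (p : nat -> R) := is_pmf p /\ positive_valued p /\
  (forall r, 0 <= prho p r) /\ ex_series (prho p).

Definition gX (r : nat) (E : (nat -> bool) -> Prop) : (nat -> nat) -> R :=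
  fun xs => ind (E (Lam r xs)).

Lemma envP_unf p N E : envP p N E = Series (fun r => prho p r * EX p N (gX r E)).
Proof. reflexivity. Qed.

Lemma gX_bdd r E : bdd 1 (gX r E).
Proof. intros xs; apply ind_bd. Qed.

Lemma gX_dep K r E : depY K E -> depX K (gX r E).
Proof.
  intros H xs xs' Hx. unfold gX. apply ind_iff. apply H. intros i Hi.
  apply Lam_dep. intros; apply Hx; lia.
Qed.

Lemma EX_gX_bd p N r E : is_pmf p -> 0 <= EX p N (gX r E) <= 1.
Proof. intros Hp; apply EX_bdd; auto; apply gX_bdd. Qed.

Lemma exs_bd_prho p (a : nat -> R) : Good p -> (forall r, 0 <= a r <= 1) ->
  ex_series (fun r => prho p r * a r).
Proof.
  intros [Hp [Hz [H0 He]]] Ha. apply (exs_cmp _ (prho p)); auto. intros r.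
  specialize (Ha r); specialize (H0 r). split; [apply Rmult_le_pos; lra|].
  rewrite <- (Rmult_1_r (prho p r)) at 2. apply Rmult_le_compat_l; lra.
Qed.

Lemma envP_ext p N E E' : (forall y, E y <-> E' y) -> envP p N E = envP p N E'.
Proof.
  intros H. rewrite !envP_unf. apply DS_ext. intros r. f_equal. f_equal.
  apply functional_extensionality; intros xs. apply ind_iff; auto.
Qed.

Lemma envP_nonneg p N E : Good p -> 0 <= envP p N E.
Proof.
  intros HG. rewrite envP_unf. pose proof HG as [Hp [Hz [H0 He]]].
  apply DS_nonneg.
  - intros r; apply Rmult_le_pos; auto; apply EX_gX_bd; auto.
  - apply exs_bd_prho; auto. intros; apply EX_gX_bd; auto.
Qed.

Lemma envP_Nindep p K N E : Good p -> depY K E -> (K <= N)%nat -> envP p N E = envP p K E.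
Proof.
  intros [Hp _] HE HKN. rewrite !envP_unf. apply DS_ext; intros r. f_equal.
  apply EX_dep; auto. apply gX_dep; auto.
Qed.

Lemma posify_EX p M f : p 0%nat = 0 -> depX M f -> EX p M (fun xs => f (posify xs)) = EX p M f.
Proof.
  intros Hz Hf. apply EX_ext_pos; auto. intros xs Hxs. apply Hf. intros i Hi.
  unfold posify. specialize (Hxs i Hi). lia.
Qed.

Lemma depY_shift1 N G : depY N G -> depY (S N) (fun y => G (shift 1 y)).
Proof. intros H y y' Hy. apply H. intros i Hi. unfold shift. apply Hy. lia. Qed.

Lemma core_shift p N G : Good p -> depY N G ->
  envP p (S N) (fun y => G (shift 1 y)) = envP p N G.
Proof.
  intros HG HGd. pose proof HG as [Hp [Hz [H0 He]]]. red in Hz.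
  rewrite !envP_unf.
  set (E := fun r => EX p N (gX r G)).
  assert (HE : forall r, 0 <= E r <= 1) by (intros; apply EX_gX_bd; auto).
  assert (Hd1 := depY_shift1 N G HGd).
  assert (S1 : forall r, EX p (S N) (gX (S r) (fun y => G (shift 1 y))) = E r).
  { intros r. rewrite <- posify_EX by (auto; apply gX_dep; auto).
    transitivity (EX p (S N) (fun xs => gX r G (posify xs))).
    - f_equal. apply functional_extensionality; intros xs. unfold gX.
      rewrite shift1_LamS by apply posify_pos. reflexivity.
    - rewrite posify_EX; auto.
      + apply EX_dep; auto; apply gX_dep; auto.
      + apply (depX_mono N); auto; apply gX_dep; auto. }
  assert (S2 : EX p (S N) (gX 0 (fun y => G (shift 1 y))) = Series (fun x => p (S x) * E x)).
  { rewrite <- posify_EX by (auto; apply gX_dep; auto). rewrite EX_S.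
    rewrite (DS_ext _ (fun x => match x with O => 0 | S x' => p (S x') * E x' end)).
    - rewrite DS_incr1. { simpl. ring. }
      apply (exs_cmp _ p); [|apply exP; auto]. intros [|x]; [split; lra|].
      pose proof (proj1 Hp (S x)). specialize (HE x). split; [apply Rmult_le_pos; lra|].
      rewrite <- (Rmult_1_r (p (S x))) at 2. apply Rmult_le_compat_l; lra.
    - intros [|x]; [rewrite Hz; ring|]. f_equal. unfold E.
      rewrite <- (posify_EX p N (gX x G)) by (auto; apply gX_dep; auto).
      f_equal. apply functional_extensionality; intros xs.
      rewrite posify_ncons. unfold gX. simpl (Nat.max 1 (S x)).
      rewrite shift1_Lam0 by (auto using posify_pos; lia).
      replace (S x - 1)%nat with x by lia. reflexivity. }
  assert (HpS : ex_series (fun x => p (S x))) by (apply (ex_series_incr_1 p); apply exP; auto).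
  assert (Hex1 : ex_series (fun x => p (S x) * E x)).
  { apply (exs_cmp _ (fun x => p (S x))); auto. intros x. pose proof (proj1 Hp (S x)).
    specialize (HE x). split; [apply Rmult_le_pos; lra|].
    rewrite <- (Rmult_1_r (p (S x))) at 2. apply Rmult_le_compat_l; lra. }
  assert (Hex2 : ex_series (fun r => prho p (S r) * E r)).
  { apply (exs_cmp _ (fun x => prho p (S x))); [|apply (ex_series_incr_1 (prho p)); auto].
    intros x. pose proof (H0 (S x)). specialize (HE x). split; [apply Rmult_le_pos; lra|].
    rewrite <- (Rmult_1_r (prho p (S x))) at 2. apply Rmult_le_compat_l; lra. }
  rewrite DS_incr1.
  2:{ apply exs_bd_prho; auto. intros; apply EX_gX_bd; auto. }
  rewrite S2.
  assert (S3 : forall k, prho p (S k) * EX p (S N) (gX (S k) (fun y => G (shift 1 y))) = prho p (S k) * E k)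
    by (intros; rewrite S1; auto).
  rewrite (DS_ext _ _ S3).
  rewrite <- DS_scal by auto. rewrite <- DS_plus by (auto; apply exs_scal; auto).
  apply DS_ext. intros r. fold (E r). rewrite (prho_rec p r Hp Hz). ring.
Qed.


Lemma shift_envP p : Good p -> forall s N K F, depY K F -> (s + K <= N)%nat ->
  envP p N (fun y => F (shift s y)) = envP p K F.
Proof.
  intros HG s. induction s as [|s IH]; intros N K F HF HN.
  - rewrite (envP_ext p N _ F).
    + apply envP_Nindep; auto. 
    + intros y. apply HF. intros i _. unfold shift. f_equal; lia.
  - destruct N as [|N]; [lia|].
    rewrite (envP_ext p (S N) _ (fun y => (fun y => F (shift s y)) (shift 1 y))).
    + rewrite (core_shift p N (fun y => F (shift s y))); auto.
      * apply IH; auto; lia.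
      * apply (depY_mono (s + K)); [lia|]. intros y y' Hy. apply HF. intros i Hi.
        unfold shift. apply Hy. lia.
    + intros y. apply HF. intros i _. unfold shift. f_equal; lia.
Qed.

Lemma Lsc_S L0 g k : Lsc L0 g (S k) = (Lsc L0 g k * mfac L0 g k)%nat.
Proof. reflexivity. Qed.

Lemma bad_shift L0 g k : forall j a y,
  bad L0 g (shift (a * Lsc L0 g k) y) k j <-> bad L0 g y k (j + a).
Proof.
  induction k as [|k IH]; intros j a y.
  - simpl. unfold shift. split.
    + intros H i Hi. specialize (H (i - a * L0)%nat). replace i with (i - a * L0 + a * L0)%nat by nia.
      apply H. nia.
    + intros H i Hi. apply H. nia.
  - rewrite Lsc_S. set (m := mfac L0 g k).
    replace (a * (Lsc L0 g k * m))%nat with ((a * m) * Lsc L0 g k)%nat by ring.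
    simpl bad. fold m. split.
    + intros [i1 [i2 [H1 [H2 [H3 [H4 H5]]]]]]. exists (i1 + a * m)%nat, (i2 + a * m)%nat.
      rewrite <- !IH. repeat split; auto; nia.
    + intros [i1 [i2 [H1 [H2 [H3 [H4 H5]]]]]]. exists (i1 - a * m)%nat, (i2 - a * m)%nat.
      rewrite !IH. replace (i1 - a * m + a * m)%nat with i1 by nia.
      replace (i2 - a * m + a * m)%nat with i2 by nia. repeat split; auto; nia.
Qed.

Lemma bad_dep L0 g k : forall j y y',
  (forall i, (j * Lsc L0 g k <= i < (j + 1) * Lsc L0 g k)%nat -> y i = y' i) ->
  (bad L0 g y k j <-> bad L0 g y' k j).
Proof.
  induction k as [|k IH]; intros j y y' Hy.
  - simpl in *. split; intros H i Hi; [rewrite <- Hy|rewrite Hy]; auto.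
  - rewrite Lsc_S in Hy. set (m := mfac L0 g k) in *. set (L := Lsc L0 g k) in *.
    simpl bad. fold m.
    assert (Hs : forall i1, (j * m <= i1 < (j + 1) * m)%nat -> (bad L0 g y k i1 <-> bad L0 g y' k i1)).
    { intros i1 Hi1. apply IH. intros i Hi. apply Hy. fold L in Hi. nia. }
    split; intros [i1 [i2 [H1 [H2 [H3 [H4 H5]]]]]]; exists i1, i2; repeat split; auto.
    all: first [lia | apply (proj1 (Hs i1 H1)); assumption | apply (proj2 (Hs i1 H1)); assumption | apply (proj1 (Hs i2 H2)); assumption | apply (proj2 (Hs i2 H2)); assumption].
Qed.


Definition bddY (B : R) (g : (nat -> bool) -> R) := forall y, 0 <= g y <= B.
Definition EE p N (g : (nat -> bool) -> R) :=
  Series (fun r => prho p r * EX p N (fun xs => g (Lam r xs))).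

Lemma envP_EE p N E : envP p N E = EE p N (fun y => ind (E y)).
Proof. reflexivity. Qed.

Lemma EE_exs p N g B : Good p -> bddY B g ->
  ex_series (fun r => prho p r * EX p N (fun xs => g (Lam r xs))).
Proof.
  intros [Hp [Hz [H0 He]]] Hg. apply (exs_cmp _ (fun r => B * prho p r)); [|apply exs_scal; auto].
  intros r. assert (Hb := EX_bdd p N Hp (fun xs => g (Lam r xs)) B (fun xs => Hg _)).
  specialize (H0 r). split; [apply Rmult_le_pos; lra|].
  rewrite Rmult_comm. apply Rmult_le_compat_r; lra.
Qed.

Lemma EE_plus p N g g' B B' : Good p -> bddY B g -> bddY B' g' ->
  EE p N (fun y => g y + g' y) = EE p N g + EE p N g'.
Proof.
  intros HG Hg Hg'. unfold EE. rewrite <- DS_plus by (eapply EE_exs; eauto).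
  apply DS_ext; intros r. rewrite (EX_plus p N (proj1 HG) _ _ B B'); [ring| |]; intros xs; auto.
Qed.

Lemma EE_le p N g g' B : Good p -> bddY B g -> bddY B g' -> (forall y, g y <= g' y) ->
  EE p N g <= EE p N g'.
Proof.
  intros HG Hg Hg' Hle.
  assert (Hd : bddY B (fun y => g' y - g y)).
  { intros y; specialize (Hg y); specialize (Hg' y); specialize (Hle y); lra. }
  assert (E : EE p N g' = EE p N (fun y => g y + (g' y - g y))).
  { unfold EE. f_equal. apply functional_extensionality; intros r. f_equal. f_equal.
    apply functional_extensionality; intros; ring. }
  rewrite E, (EE_plus p N g _ B B); auto.
  assert (0 <= EE p N (fun y => g' y - g y)); [|lra].
  apply DS_nonneg; [|apply (EE_exs p N (fun y => g' y - g y) B); auto]. intros r.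
  apply Rmult_le_pos; [apply HG|]. apply (EX_bdd p N (proj1 HG) _ B). intros xs; apply Hd.
Qed.

Lemma EE_zero p N : Good p -> EE p N (fun _ => 0) = 0.
Proof.
  intros HG. unfold EE. rewrite (DS_ext _ (fun _ => 0)); [apply DS_zero|].
  intros r. rewrite EX_const; [ring|apply HG].
Qed.

Fixpoint fs (n : nat) (f : nat -> R) : R :=
  match n with O => 0 | S n' => fs n' f + f n' end.

Lemma fs_bd n f B : (forall i, 0 <= f i <= B) -> 0 <= fs n f <= INR n * B.
Proof.
  intros H. induction n as [|n IH]; simpl; [lra|]. specialize (H n).
  destruct n; simpl in *; lra.
Qed.

Lemma fs_le n f g : (forall i, (i < n)%nat -> f i <= g i) -> fs n f <= fs n g.
Proof. induction n; simpl; intros H; [lra|]. pose proof (H n ltac:(lia)). pose proof (IHn ltac:(intros; apply H; lia)). lra. Qed.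

Lemma fs_ge n f i : (forall i, 0 <= f i) -> (i < n)%nat -> f i <= fs n f.
Proof.
  intros H0. induction n; intros Hi; [lia|]. simpl.
  assert (0 <= fs n f) by (clear -H0; induction n; simpl; [lra|]; pose proof (H0 n); lra).
  destruct (Nat.eq_dec i n) as [->|Hne]; [lra|]. pose proof (IHn ltac:(lia)). pose proof (H0 n). lra.
Qed.

Lemma fs_const n c : fs n (fun _ => c) = INR n * c.
Proof. induction n; simpl fs; [simpl; ring|]. rewrite IHn, S_INR. ring. Qed.

Lemma EE_fs p N n (g : nat -> (nat -> bool) -> R) B : Good p -> (forall i, bddY B (g i)) -> 0 <= B ->
  EE p N (fun y => fs n (fun i => g i y)) = fs n (fun i => EE p N (g i)).
Proof.
  intros HG Hg HB. induction n as [|n IH]; simpl fs.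
  - apply EE_zero; auto.
  - rewrite (EE_plus p N _ _ (INR n * B) B); auto.
    + rewrite IH; auto.
    + intros y. apply fs_bd. intros; apply Hg.
Qed.

Lemma floorN_le x : 0 <= x -> INR (floorN x) <= x.
Proof.
  intros Hx. unfold floorN. destruct (base_Int_part x) as [H1 H2].
  assert (0 <= Int_part x)%Z.
  { apply le_IZR. pose proof (lt_IZR (-1) (Int_part x)). assert (-1 < Int_part x)%Z by (apply lt_IZR; simpl; lra). simpl. apply IZR_le. lia. }
  rewrite INR_IZR_INZ, Z2Nat.id; auto.
Qed.

Lemma floorN_ge3 x : 3 <= x -> (3 <= floorN x)%nat.
Proof.
  intros Hx. unfold floorN. destruct (base_Int_part x) as [H1 H2].
  assert (2 < Int_part x)%Z by (apply lt_IZR; simpl; lra). lia.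
Qed.


Lemma step p c1 eps L0 g k Q : Good p ->
  (forall (m n M : nat) (A B : (nat -> bool) -> Prop),
      (1 <= n)%nat -> dep_on A 0 m -> dep_on B (m + n) M ->
      envP p (S M) (fun y => A y /\ B y)
        <= envP p (S M) A * envP p (S M) B + c1 * Rpower (INR n) (- eps)) ->
  0 < eps -> 0 < c1 -> (1 <= Lsc L0 g k)%nat -> (1 <= mfac L0 g k)%nat ->
  envP p (Lsc L0 g k) (fun y => bad L0 g y k 0) <= Q ->
  envP p (Lsc L0 g (S k)) (fun y => bad L0 g y (S k) 0)
    <= INR (mfac L0 g k) * (INR (mfac L0 g k) * (Q * Q + c1 * Rpower (INR (Lsc L0 g k)) (- eps))).
Proof.
  intros HG Hmix Heps Hc1 HL Hm HQ.
  set (L := Lsc L0 g k) in *. set (m := mfac L0 g k) in *.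
  set (N := Lsc L0 g (S k)). assert (HN : N = (L * m)%nat) by reflexivity.
  set (P := envP p L (fun y => bad L0 g y k 0)) in *.
  assert (HP0 : 0 <= P) by apply envP_nonneg, HG.
  set (X := Q * Q + c1 * Rpower (INR L) (- eps)).
  set (B := fun i y => bad L0 g y k i).
  assert (HdepL : depY L (fun y => bad L0 g y k 0)).
  { intros y y' Hy. apply bad_dep. intros i Hi. apply Hy. fold L in Hi. lia. }
  assert (Ha : forall i, (i < m)%nat -> envP p N (B i) = P).
  { intros i Hi. unfold B. rewrite (envP_ext p N _ (fun y => bad L0 g (shift (i * L) y) k 0)).
    - apply (shift_envP p HG (i * L) N L (fun y => bad L0 g y k 0)); auto. rewrite HN. nia.
    - intros y. pose proof (bad_shift L0 g k 0 i y) as Hs. fold L in Hs. simpl in Hs. tauto. }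
  assert (Hb : forall i1 i2, (i1 + 2 <= i2)%nat -> (i2 < m)%nat ->
            envP p N (fun y => B i1 y /\ B i2 y) <= X).
  { intros i1 i2 H12 H2m.
    assert (E : N = S (N - 1)) by (rewrite HN; nia). rewrite E.
    eapply Rle_trans.
    { apply (Hmix ((i1 + 1) * L - 1)%nat ((i2 - i1 - 1) * L + 1)%nat (N - 1)%nat (B i1) (B i2)).
      - nia.
      - intros y y' Hy. unfold B. apply bad_dep. intros i Hi. apply Hy. fold L in Hi. lia.
      - intros y y' Hy. unfold B. apply bad_dep. intros i Hi. apply Hy. fold L in Hi.
        rewrite HN. split; nia. }
    rewrite <- E, !Ha by lia. unfold X.
    assert (HPQ : P * P <= Q * Q) by (apply Rmult_le_compat; lra).
    assert (Rpower (INR ((i2 - i1 - 1) * L + 1)) (- eps) <= Rpower (INR L) (- eps)).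
    { rewrite !Rpower_Ropp. apply Rinv_le_contravar; [apply Rpower_pos'|].
      apply Rle_Rpower_l; [lra|]. split; [apply lt_0_INR; lia|apply le_INR; nia]. }
    apply Rplus_le_compat; auto. apply Rmult_le_compat_l; lra. }
  assert (HX : 0 <= X).
  { unfold X. apply Rplus_le_le_0_compat; [apply Rle_0_sqr|]. left; apply Rmult_lt_0_compat; auto; apply Rpower_pos'. }
  set (T := fun i1 i2 y => if (i1 + 2 <=? i2)%nat then ind (B i1 y /\ B i2 y) else 0).
  assert (HT : forall i1 i2, bddY 1 (T i1 i2)).
  { intros i1 i2 y. unfold T. destruct (i1 + 2 <=? i2)%nat; [apply ind_bd|lra]. }
  assert (HT1 : forall i1, bddY (INR m * 1) (fun y => fs m (fun i2 => T i1 i2 y))).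
  { intros i1 y. apply fs_bd. intros; apply HT. }
  assert (Hm1 : 1 <= INR m) by (apply (le_INR 1); auto).
  rewrite envP_EE. eapply Rle_trans.
  { apply (EE_le p N _ (fun y => fs m (fun i1 => fs m (fun i2 => T i1 i2 y))) (INR m * (INR m * 1))); auto.
    - intros y. pose proof (ind_bd (bad L0 g y (S k) 0)). split; [lra|].
      assert (1 <= INR m * (INR m * 1)) by nra. lra.
    - intros y. apply fs_bd. intros; apply HT1.
    - intros y. destruct (classic (bad L0 g y (S k) 0)) as [Hbad|Hbad].
      + rewrite ind_true by auto. simpl in Hbad. fold m in Hbad.
        destruct Hbad as [i1 [i2 [H1 [H2 [H3 [H4 H5]]]]]].
        assert (Hone : forall a b, (a < m)%nat -> (b < m)%nat -> (a + 2 <= b)%nat -> B a y -> B b y ->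
                   1 <= fs m (fun i1 => fs m (fun i2 => T i1 i2 y))).
        { intros a b Ha' Hb' Hab HA HB. eapply Rle_trans; [|apply (fs_ge _ _ a); auto].
          2: { intros; apply HT1. }
          eapply Rle_trans; [|apply (fs_ge _ _ b); auto]. 2: { intros; apply HT. }
          unfold T. destruct (Nat.leb_spec (a + 2) b); [|lia]. rewrite ind_true; [lra|auto]. }
        destruct H3; [apply (Hone i1 i2)|apply (Hone i2 i1)]; auto; lia.
      + rewrite ind_false by auto. apply (fs_bd m _ (INR m * 1)). intros; apply HT1. }
  rewrite (EE_fs p N m _ (INR m * 1)); auto; [|lra].
  rewrite <- fs_const. apply fs_le. intros i1 Hi1.
  rewrite (EE_fs p N m _ 1); auto; [|lra].
  rewrite <- fs_const. apply fs_le. intros i2 Hi2.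
  unfold T. destruct (Nat.leb_spec (i1 + 2) i2).
  - rewrite <- envP_EE. apply Hb; auto.
  - rewrite EE_zero; auto.
Qed.


Lemma Rpower_small L x : (L <= 1)%nat -> Rpower (INR L) x = 1.
Proof.
  intros H. destruct L as [|[|L]]; [| |exfalso; lia].
  - change (INR 0) with 0. unfold Rpower, ln. destruct Rlt_dec as [r|r]; [exfalso; exact (Rlt_irrefl 0 r)|]. rewrite Rmult_0_r, exp_0; auto.
  - change (INR 1) with 1. unfold Rpower. rewrite ln_1, Rmult_0_r, exp_0; auto.
Qed.

Lemma Lsc_facts L0 g : 1 < g -> Rpower (INR L0) (g - 1) >= 3 -> (2 <= L0)%nat ->
  forall k, (L0 <= Lsc L0 g k)%nat /\ (3 <= mfac L0 g k)%nat.
Proof.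
  intros Hg H3 HL0.
  assert (Hm : forall k, (L0 <= Lsc L0 g k)%nat -> (3 <= mfac L0 g k)%nat).
  { intros k Hk. unfold mfac. apply floorN_ge3.
    apply Rle_trans with (Rpower (INR L0) (g - 1)); [lra|].
    apply Rle_Rpower_l; [lra|]. split; [apply lt_0_INR; lia|apply le_INR; auto]. }
  induction k as [|k IH].
  - split; [simpl; lia|apply Hm; simpl; lia].
  - assert (L0 <= Lsc L0 g (S k))%nat.
    { rewrite Lsc_S. destruct IH as [IH1 IH2]. nia. }
    split; auto.
Qed.

Lemma base_case p eps alpha L0 g : Good p -> 0 < eps -> 0 < alpha -> (1 <= L0)%nat ->
  ex_series (fun r => prho p r * rpow (INR r) eps) ->
  Rpower (INR L0) (eps - alpha) >= Series (fun k => prho p k * rpow (INR k) eps) ->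
  envP p L0 (fun y => bad L0 g y 0 0) <= Rpower (INR L0) (- alpha).
Proof.
  intros HG He Ha HL0 Hex HL0ii. pose proof HG as [Hp [Hz [H0 Hpe]]].
  assert (Hc : forall r xs, bad L0 g (Lam r xs) 0 0 <-> (L0 <= r)%nat).
  { intros r xs. simpl. split.
    - intros H. destruct (Nat.le_gt_cases L0 r) as [|Hlt]; auto.
      specialize (H r ltac:(lia)). assert (Lam r xs r = true) by (apply Lam_true; exists 0%nat; simpl; split; auto; lia).
      congruence.
    - intros Hr i Hi. destruct (Lam r xs i) eqn:E; auto. apply Lam_true in E.
      destruct E as [j [_ Ej]]. pose proof (Xpos_ge r xs j). lia. }
  rewrite envP_unf.
  rewrite (DS_ext _ (fun r => prho p r * ind (L0 <= r)%nat)).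
  2:{ intros r. f_equal. unfold gX. rewrite (EX_ext_pos p L0 Hz _ (fun _ => ind (L0 <= r)%nat)).
      - apply EX_const; auto.
      - intros xs _. apply ind_iff, Hc. }
  set (RL := Rpower (INR L0) eps).
  assert (HRL : 0 < RL) by apply Rpower_pos'.
  apply Rle_trans with (Series (fun r => / RL * (prho p r * rpow (INR r) eps))).
  - apply DS_le; [|apply exs_scal; auto]. intros r. split.
    + apply Rmult_le_pos; auto. apply ind_bd.
    + destruct (Nat.le_gt_cases L0 r) as [Hr|Hr].
      * rewrite ind_true by auto.
        assert (RL <= rpow (INR r) eps).
        { unfold RL. destruct L0 as [|L0']; [lia|]. rewrite <- rpow_INR_S. apply rpow_mono; lia || lra. }
        assert (H1 : 1 <= / RL * rpow (INR r) eps).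
        { rewrite <- (Rinv_l RL) by lra. apply Rmult_le_compat_l; [left; apply Rinv_0_lt_compat; auto|auto]. }
        replace (/ RL * (prho p r * rpow (INR r) eps)) with (prho p r * (/ RL * rpow (INR r) eps)) by ring.
        apply Rmult_le_compat_l; auto.
      * rewrite ind_false by lia. rewrite Rmult_0_r. apply Rmult_le_pos; [left; apply Rinv_0_lt_compat; auto|].
        apply Rmult_le_pos; auto; apply rpow_nonneg.
  - rewrite DS_scal by auto.
    replace (Rpower (INR L0) (- alpha)) with (/ RL * Rpower (INR L0) (eps - alpha)).
    + apply Rmult_le_compat_l; [left; apply Rinv_0_lt_compat; auto|lra].
    + unfold RL. replace (eps - alpha) with (eps + - alpha) by ring. rewrite Rpower_plus. field.
      apply Rgt_not_eq, Rpower_pos'.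
Qed.

Lemma arith (L m : nat) c1 eps alpha gamma :
  (2 <= L)%nat -> (1 <= m)%nat -> INR m <= Rpower (INR L) (gamma - 1) -> 0 < c1 ->
  0 < alpha <= eps / 2 -> 1 < gamma -> 0 <= 2 + 2 * alpha - gamma * alpha - 2 * gamma ->
  Rpower (INR L) (2 + 2 * alpha - gamma * alpha - 2 * gamma) >= c1 + 1 ->
  INR m * (INR m * (Rpower (INR L) (- alpha) * Rpower (INR L) (- alpha) + c1 * Rpower (INR L) (- eps)))
    <= Rpower (INR (L * m)) (- alpha).
Proof.
  intros HL Hm Hmg Hc1 Ha Hg Hc2 H3.
  set (x := INR L) in *. set (y := INR m) in *.
  assert (Hx : 2 <= x) by (unfold x; apply (le_INR 2) in HL; simpl in HL; lra).
  assert (Hy : 1 <= y) by (unfold y; apply (le_INR 1) in Hm; simpl in Hm; lra).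
  assert (Hxe : Rpower x (- eps) <= Rpower x (- alpha) * Rpower x (- alpha)).
  { rewrite <- Rpower_plus. apply Rle_Rpower; lra. }
  assert (Hyy : y * y = Rpower y (2 + alpha) * Rpower y (- alpha)).
  { rewrite <- Rpower_plus. replace (2 + alpha + - alpha) with (1 + 1) by ring.
    rewrite Rpower_plus, Rpower_1; lra. }
  assert (Hkey : Rpower y (2 + alpha) * (1 + c1) <= Rpower x alpha).
  { replace (Rpower x alpha) with (Rpower x ((gamma - 1) * (2 + alpha)) * Rpower x (2 + 2 * alpha - gamma * alpha - 2 * gamma)).
    2:{ rewrite <- Rpower_plus. f_equal; ring. }
    apply Rmult_le_compat.
    - left; apply Rpower_pos'.
    - lra.
    - rewrite <- Rpower_mult. apply Rle_Rpower_l; [lra|split; [lra|exact Hmg]].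
    - lra. }
  rewrite mult_INR. fold x y. rewrite <- Rpower_mult_distr by lra.
  set (A := Rpower x (- alpha)) in *. set (By := Rpower y (- alpha)) in *.
  assert (HA : 0 < A) by apply Rpower_pos'. assert (HB : 0 < By) by apply Rpower_pos'.
  assert (HAx : Rpower x alpha * A = 1).
  { unfold A. rewrite <- Rpower_plus. replace (alpha + - alpha) with 0 by ring. apply Rpower_O; lra. }
  apply Rle_trans with (y * y * ((1 + c1) * (A * A))).
  - assert (0 <= c1 * Rpower x (- eps) <= c1 * (A * A)).
    { split; [left; apply Rmult_lt_0_compat; auto; apply Rpower_pos'|]. apply Rmult_le_compat_l; lra. }
    assert (0 <= y * y) by nra.
    replace (y * (y * (A * A + c1 * Rpower x (- eps)))) with (y * y * (A * A + c1 * Rpower x (- eps))) by ring.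
    apply Rmult_le_compat_l; auto. lra.
  - rewrite Hyy. replace (Rpower y (2 + alpha) * By * ((1 + c1) * (A * A))) with
      ((Rpower y (2 + alpha) * (1 + c1)) * (A * A * By)) by ring.
    apply Rle_trans with (Rpower x alpha * (A * A * By)).
    + apply Rmult_le_compat_r; auto. left; repeat apply Rmult_lt_0_compat; auto.
    + replace (Rpower x alpha * (A * A * By)) with ((Rpower x alpha * A) * A * By) by ring.
      rewrite HAx. lra.
Qed.


Theorem lemma3p1
  (p : nat -> R) (eps c1 alpha gamma : R) (L0 : nat)
  (Hpmf : is_pmf p) (Hpos : positive_valued p) (Hap : aperiodic p)
  (Heps : 0 < eps)
  (Hmom : exists l, infinite_sum (fun i => p i * Rpower (INR i) (1 + eps)) l)
  (Hc1 : 0 < c1)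
  (Hmix : forall (m n M : nat) (A B : (nat -> bool) -> Prop),
      (1 <= n)%nat -> dep_on A 0 m -> dep_on B (m + n) M ->
      envP p (S M) (fun y => A y /\ B y)
        <= envP p (S M) A * envP p (S M) B + c1 * Rpower (INR n) (- eps))
  (Halpha : 0 < alpha <= eps / 2)
  (Hgamma : 1 < gamma < 1 + alpha / (alpha + 2))
  (HL0i : Rpower (INR L0) (gamma - 1) >= 3)
  (HL0ii : Rpower (INR L0) (eps - alpha)
             >= Series (fun k => prho p k * rpow (INR k) eps))
  (HL0iii : Rpower (INR L0) (2 + 2 * alpha - gamma * alpha - 2 * gamma) >= c1 + 1) :
  forall k : nat,
    envP p (Lsc L0 gamma k) (fun y => bad L0 gamma y k 0)
      <= Rpower (INR (Lsc L0 gamma k)) (- alpha).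
Proof.
  assert (HG : Good p).
  { split; [auto|split; [auto|split]].
    - intros r; apply (prho_nonneg p eps); auto.
    - apply (prho_exs p eps); auto. }
  assert (HL02 : (2 <= L0)%nat).
  { destruct (Nat.le_gt_cases L0 1) as [H|H]; [|lia].
    rewrite Rpower_small in HL0i by auto. lra. }
  assert (Hc2 : 0 < 2 + 2 * alpha - gamma * alpha - 2 * gamma).
  { set (t := alpha / (alpha + 2)) in *.
    assert (Ht : t * (alpha + 2) = alpha) by (unfold t; field; lra). nra. }
  pose proof (Lsc_facts L0 gamma ltac:(lra) HL0i HL02) as HF.
  induction k as [|k IH].
  - simpl. apply (base_case p eps alpha L0 gamma); auto; try lra; try lia.
    apply prho_rpow_exs; auto.
  - destruct (HF k) as [HLk Hmk].
    eapply Rle_trans.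
    { apply (step p c1 eps L0 gamma k (Rpower (INR (Lsc L0 gamma k)) (- alpha))); auto; lia. }
    rewrite Lsc_S. apply arith with (gamma := gamma); auto; try lia; try lra.
    + unfold mfac. apply floorN_le. left; apply Rpower_pos'.
    + apply Rle_ge. eapply Rle_trans; [apply Rge_le, HL0iii|]. apply Rle_Rpower_l; [lra|].
      split; [apply lt_0_INR; lia|apply le_INR; auto].
Qed.
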